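(* Fix $\eta\in(0,1/3)$. There is a constant $c>0$ depending only on $\eta$ such that the following holds. Let $N,P\ge 2$ be integers and let $\boldsymbol a\in\mathbb Z^N$, $\boldsymbol\phi_0,\boldsymbol\phi_1\in\mathbb Z^P$ be such that, with $\overline{a_{n\cdot}}=a_{n\cdot}/(2P)$, $f_{p,0}=\phi_{p,0}/(2N)$, $f_{p,1}=\phi_{p,1}/(2N)$, one has $\overline{a_{n\cdot}}\in[\eta,1-\eta]$ for all $n\in[N]$ and $f_{p,0},f_{p,1}\ge\eta$, $f_{p,0}+f_{p,1}\le 1-\eta$ for all $p\in[P]$. If exactly one of the two statements ''$|\mathscr A_1(N,P;\boldsymbol a)|>|\mathscr A_2(N,P;\boldsymbol\phi_0,\boldsymbol\phi_1)|$'' and ''$H_1-H_2+\overline f>0$'' holds, then $$H_1-H_2+\overline f\in\left(-c\left(\frac{\log N}{N}+\frac{\log P}{P}\right),\ c\left(\frac{\log N}{N}+\frac{\log P}{P}\right)\right].$$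
   Context: Let $N,P$ be positive integers. An admixed array is a pair $[\mathbf A,\mathbf X]$ of matrices $\mathbf A=(A_{nj}),\mathbf X=(X_{nj})\in\{0,1\}^{N\times 2P}$; for $p\in[P]$, columns $p$ and $P+p$ form the $p$th locus. The row local ancestry tally of row $n$ is $A_{n\cdot}=\sum_{j=1}^{2P}A_{nj}$. The ancestry-specific allele dosages of locus $p$ are $\Phi_{p,0}=\sum_{n=1}^N[(1-A_{np})X_{np}+(1-A_{n(P+p)})X_{n(P+p)}]$ and $\Phi_{p,1}=\sum_{n=1}^N[A_{np}X_{np}+A_{n(P+p)}X_{n(P+p)}]$. $\mathscr A_1(N,P;\boldsymbol a)$ is the set of admixed arrays with $A_{n\cdot}=a_{n\cdot}$ for all $n$; $\mathscr A_2(N,P;\boldsymbol\phi_0,\boldsymbol\phi_1)$ is the set of admixed arrays with $\Phi_{p,0}=\phi_{p,0}$, $\Phi_{p,1}=\phi_{p,1}$ for all $p$. $\log$ is base 2. For a probability vector $(z_1,\ldots,z_I)$, $H(z_1,\ldots,z_I)=\sum_i z_i\log(1/z_i)$ (binary Shannon entropy). Define $H_1=\frac1N\sum_{n=1}^N H(\overline{a_{n\cdot}},1-\overline{a_{n\cdot}})$, $H_2=\frac1P\sum_{p=1}^P H(f_{p,0},f_{p,1},1-f_{p,0}-f_{p,1})$, and $\overline f=\frac1P\sum_{p=1}^P(f_{p,0}+f_{p,1})$. *)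

(* Defs.v *)
From HB Require Import structures.
From mathcomp Require Import all_boot all_order all_algebra.
From mathcomp Require Import all_classical all_reals all_analysis.
Set Implicit Arguments. Unset Strict Implicit. Unset Printing Implicit Defensive.
Import Order.TTheory GRing.Theory Num.Theory.
Local Open Scope ring_scope.

(* Admixed arrays: pairs (A, X) of N x 2P boolean (0/1) matrices.
   Columns are indexed by 'I_(P + P); locus p consists of columns
   lshift P p (value p) and rshift P p (value P + p). *)
Definition arr (N P : nat) := 'M[bool]_(N, P + P).

Definition row_tally N P (A : arr N P) (n : 'I_N) : nat :=
  (\sum_(j < P + P) (A n j : nat))%N.

Definition Phi0 N P (A X : arr N P) (p : 'I_P) : nat :=
  (\sum_(n < N) (((~~ A n (lshift P p)) && X n (lshift P p) : nat)
               + ((~~ A n (rshift P p)) && X n (rshift P p) : nat)))%N.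
Definition Phi1 N P (A X : arr N P) (p : 'I_P) : nat :=
  (\sum_(n < N) ((A n (lshift P p) && X n (lshift P p) : nat)
               + (A n (rshift P p) && X n (rshift P p) : nat)))%N.

Definition scrA1 N P (a : 'I_N -> int) : {set arr N P * arr N P} :=
  [set AX : arr N P * arr N P | [forall n, (row_tally AX.1 n)%:Z == a n]].

Definition scrA2 N P (phi0 phi1 : 'I_P -> int) : {set arr N P * arr N P} :=
  [set AX : arr N P * arr N P |
     [forall p, ((Phi0 AX.1 AX.2 p)%:Z == phi0 p)
                && ((Phi1 AX.1 AX.2 p)%:Z == phi1 p)]].

Definition log2 {R : realType} (x : R) : R := ln x / ln 2.

Definition hterm {R : realType} (z : R) : R :=
  if z == 0 then 0 else z * log2 (z^-1).

Definition entropy {R : realType} (zs : seq R) : R := \sum_(z <- zs) hterm z.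

Definition abar {R : realType} N P (a : 'I_N -> int) (n : 'I_N) : R :=
  (a n)%:~R / (2 * P%:R).
Definition fq {R : realType} N P (phi : 'I_P -> int) (p : 'I_P) : R :=
  (phi p)%:~R / (2 * N%:R).

Definition H1 {R : realType} N P (a : 'I_N -> int) : R :=
  N%:R^-1 * \sum_(n < N) entropy [:: abar P a n; 1 - abar P a n].
Definition H2 {R : realType} N P (phi0 phi1 : 'I_P -> int) : R :=
  P%:R^-1 * \sum_(p < P)
     entropy [:: fq N phi0 p; fq N phi1 p; 1 - fq N phi0 p - fq N phi1 p].
Definition fbar {R : realType} N P (phi0 phi1 : 'I_P -> int) : R :=
  P%:R^-1 * \sum_(p < P) (fq N phi0 p + fq N phi1 p).

(* Main.v *)
Require Import Defs.
From HB Require Import structures.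
From mathcomp Require Import all_boot all_order all_algebra.
From mathcomp Require Import zify.

Module Comb.
Set Implicit Arguments. Unset Strict Implicit. Unset Printing Implicit Defensive.
Lemma card_bij (T U : finType) (F : T -> U) (G : U -> T) (Q : pred U) :
  cancel F G -> cancel G F -> #|[set x | Q (F x)]| = #|[set y | Q y]|.
Proof.
move=> FK GK; rewrite -(card_imset _ (can_inj FK)); apply: eq_card => y.
rewrite !inE; apply/imsetP/idP => [[x]|Qy].
  by rewrite inE => Qx ->.
by exists (G y); rewrite ?inE GK.
Qed.

Lemma card_prod_ffun (I V : finType) (Q : I -> pred V) :
  #|[set f : {ffun I -> V} | [forall i, Q i (f i)]]| = \prod_i #|[set v | Q i v]|.
Proof.
rewrite (@eq_card _ _ (family Q)); last first.
  by move=> f; rewrite inE.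
rewrite card_family foldrE big_map big_enum /=.
by apply: eq_big => [//|i _]; rewrite cardsE.
Qed.

Lemma sum_bool_card (I : finType) (b : pred I) :
  (\sum_i (b i : nat))%N = #|[set i | b i]|.
Proof.
rewrite cardsE -sum1_card [RHS]big_mkcond /=.
by apply: eq_bigr => i _; rewrite unfold_in; case: (b i).
Qed.

Lemma cnt_b1 (J : finType) k :
  #|[set v : {set J} * {set J} | #|v.1| == k]| = 'C(#|J|, k) * 2 ^ #|J|.
Proof.
have -> : [set v : {set J} * {set J} | #|v.1| == k] =
   setX [set T : {set J} | #|T| == k] [set: {set J}].
  by apply/setP => -[x y]; rewrite !inE andbT.
rewrite cardsX card_draws; congr (_ * _).
by rewrite -powersetT card_powerset cardsT.
Qed.

Lemma cnt_inter (J : finType) (S : {set J}) k :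
  #|[set T : {set J} | #|S :&: T| == k]| = 'C(#|S|, k) * 2 ^ #|~: S|.
Proof.
pose f (T : {set J}) := (T :&: S, T :\: S).
have finj : injective f.
  by move=> T1 T2 [e1 e2]; rewrite -(setID T1 S) -(setID T2 S) e1 e2.
rewrite -(card_imset _ finj).
have -> : [set f x | x in [set T : {set J} | #|S :&: T| == k]] =
   setX [set A : {set J} | A \subset S & #|A| == k] (powerset (~: S)).
  apply/setP => -[U V]; rewrite !inE /=; apply/imsetP/andP => [[T]|].
    rewrite inE => HT [-> ->].
    by rewrite subsetIr (setIC T S) HT setDE subsetIr.
  move=> -[/andP [sUS cU] sVS].
  exists (U :|: V).
    rewrite inE; suff -> : S :&: (U :|: V) = U by [].
    apply/setP => x; move: (subsetP sUS x) (subsetP sVS x) => /implyP h1 /implyP h2.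
    by move: h1 h2; rewrite !inE; case: (x \in U); case: (x \in V); case: (x \in S).
  rewrite /f; congr (_, _); apply/setP => x;
    move: (subsetP sUS x) (subsetP sVS x) => /implyP h1 /implyP h2;
    by move: h1 h2; rewrite !inE; case: (x \in U); case: (x \in V); case: (x \in S).
by rewrite cardsX cards_draws card_powerset.
Qed.

Lemma cnt_b2 (J : finType) k0 k1 :
  #|[set v : {set J} * {set J} | (#|v.1 :\: v.2| == k0) && (#|v.1 :&: v.2| == k1)]|
  = 'C(#|J|, k0 + k1) * ('C(k0 + k1, k1) * 2 ^ (#|J| - (k0 + k1))).
Proof.
rewrite cardsE -sum1_card.
transitivity (\sum_(S : {set J}) \sum_(T : {set J} | (#|S :\: T| == k0) && (#|S :&: T| == k1)) 1).
  by rewrite pair_big_dep; apply: eq_bigl => -[S T].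
transitivity (\sum_(S : {set J}) (if #|S| == k0 + k1 then 'C(k0 + k1, k1) * 2 ^ (#|J| - (k0 + k1)) else 0)).
  apply: eq_bigr => S _.
  case: eqP => hs.
    have hc : #|~: S| = #|J| - #|S| by rewrite {1}(cardsCs (~: S)) setCK.
    rewrite sum1_card -hs -hc -cnt_inter.
    rewrite -cardsE; apply: eq_card => T; rewrite !inE.
    have h := cardsID T S.
    rewrite unfold_in /=.
    apply/idP/idP => [/andP[_ ->]//|/eqP e]; rewrite e eqxx andbT; apply/eqP; lia.
  apply: big_pred0 => T; apply/negP => /andP[/eqP e1 /eqP e2]; apply: hs.
  have h := cardsID T S; lia.
rewrite -big_mkcond /= sum_nat_const.
have -> : #|[pred S : {set J} | #|S| == k0 + k1]| = #|[set S : {set J} | #|S| == k0 + k1]| by rewrite cardsE.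
by rewrite card_draws.
Qed.

Definition F1 N P (AX : arr N P * arr N P) :
  {ffun 'I_N -> {set 'I_(P + P)} * {set 'I_(P + P)}} :=
  [ffun n => ([set j | AX.1 n j], [set j | AX.2 n j])].
Definition G1 N P (f : {ffun 'I_N -> {set 'I_(P + P)} * {set 'I_(P + P)}}) :
  arr N P * arr N P :=
  ((\matrix_(n, j) (j \in (f n).1))%R, (\matrix_(n, j) (j \in (f n).2))%R).

Lemma F1K N P : cancel (@F1 N P) (@G1 N P).
Proof. by move=> [A X]; congr (_, _); apply/matrixP => i j; rewrite !mxE ffunE inE. Qed.
Lemma G1K N P : cancel (@G1 N P) (@F1 N P).
Proof.
move=> f; apply/ffunP => n; rewrite ffunE; case E: (f n) => [U V].
by congr (_, _); apply/setP => j; rewrite inE mxE E.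
Qed.

Lemma card_A1 N P (a : 'I_N -> int) : (forall n, (0 <= a n)%R) ->
  #|scrA1 P a| = \prod_(n < N) ('C(P + P, `|a n|%N) * 2 ^ (P + P)).
Proof.
move=> ha; rewrite /scrA1.
transitivity (#|[set x | (fun f : {ffun 'I_N -> {set 'I_(P + P)} * {set 'I_(P + P)}} =>
                 [forall n, (Posz #|(f n).1| == a n)]) (F1 x)]|).
  apply: eq_card => x; rewrite !inE; apply: eq_forallb => n.
  by rewrite ffunE /row_tally sum_bool_card.
rewrite (@card_bij _ _ _ _ (fun f : {ffun 'I_N -> {set 'I_(P + P)} * {set 'I_(P + P)}} => [forall n, Posz #|(f n).1| == a n]) (@F1K N P) (@G1K N P)) (card_prod_ffun (fun n (v : {set 'I_(P + P)} * {set 'I_(P + P)}) => Posz #|v.1| == a n)); apply: eq_bigr => n _.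
have -> : a n = Posz (`|a n|%N) by rewrite gez0_abs.
rewrite -[in RHS](card_ord (P + P)) -cnt_b1; apply: eq_card => v; rewrite !inE.
by rewrite eqz_nat.
Qed.

Definition colj P (p : 'I_P) (b : bool) : 'I_(P + P) :=
  if b then rshift P p else lshift P p.

Definition F2 N P (AX : arr N P * arr N P) :
  {ffun 'I_P -> {set 'I_N * bool} * {set 'I_N * bool}} :=
  [ffun p => ([set c | AX.2 c.1 (colj p c.2)], [set c | AX.1 c.1 (colj p c.2)])].

Definition sel N P (f : {ffun 'I_P -> {set 'I_N * bool} * {set 'I_N * bool}})
   (k : {set 'I_N * bool} * {set 'I_N * bool} -> {set 'I_N * bool})
   (n : 'I_N) (j : 'I_(P + P)) : bool :=
  match split j with inl p => (n, false) \in k (f p) | inr p => (n, true) \in k (f p) end.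

Definition G2 N P (f : {ffun 'I_P -> {set 'I_N * bool} * {set 'I_N * bool}}) :
  arr N P * arr N P :=
  ((\matrix_(n, j) sel f snd n j)%R, (\matrix_(n, j) sel f fst n j)%R).

Lemma F2K N P : cancel (@F2 N P) (@G2 N P).
Proof.
move=> [A X]; congr (_, _); apply/matrixP => n j; rewrite !mxE /sel;
  by case: split_ordP => p ->; rewrite ffunE inE.
Qed.

Lemma G2K N P : cancel (@G2 N P) (@F2 N P).
Proof.
move=> f; apply/ffunP => p; rewrite ffunE; case E: (f p) => [U V].
congr (_, _); apply/setP => -[n b]; rewrite inE mxE /sel /colj /=; case: b.
- by rewrite -[rshift P p]/(unsplit (inr p)) unsplitK E.
- by rewrite -[lshift P p]/(unsplit (inl p)) unsplitK E.
- by rewrite -[rshift P p]/(unsplit (inr p)) unsplitK E.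
- by rewrite -[lshift P p]/(unsplit (inl p)) unsplitK E.
Qed.

Lemma Phi0E N P (A X : arr N P) p :
  Phi0 A X p = #|(F2 (A, X) p).1 :\: (F2 (A, X) p).2|.
Proof.
rewrite /Phi0 ffunE.
transitivity (\sum_(c : 'I_N * bool) ((X c.1 (colj p c.2) && ~~ A c.1 (colj p c.2)) : nat)).
  rewrite -(pair_big xpredT xpredT (fun n (b : bool) => ((X n (colj p b) && ~~ A n (colj p b)) : nat))) /=.
  by apply: eq_bigr => n _; rewrite big_bool /colj /= addnC; congr (_ + _); rewrite andbC.
by rewrite sum_bool_card; apply: eq_card => c; rewrite !inE /= andbC.
Qed.

Lemma Phi1E N P (A X : arr N P) p :
  Phi1 A X p = #|(F2 (A, X) p).1 :&: (F2 (A, X) p).2|.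
Proof.
rewrite /Phi1 ffunE.
transitivity (\sum_(c : 'I_N * bool) ((X c.1 (colj p c.2) && A c.1 (colj p c.2)) : nat)).
  rewrite -(pair_big xpredT xpredT (fun n (b : bool) => ((X n (colj p b) && A n (colj p b)) : nat))) /=.
  by apply: eq_bigr => n _; rewrite big_bool /colj /= addnC; congr (_ + _); rewrite andbC.
by rewrite sum_bool_card; apply: eq_card => c; rewrite !inE /=.
Qed.

Lemma card_A2 N P (phi0 phi1 : 'I_P -> int) :
  (forall p, (0 <= phi0 p)%R) -> (forall p, (0 <= phi1 p)%R) ->
  #|scrA2 N phi0 phi1| = \prod_(p < P)
    ('C(N * 2, `|phi0 p|%N + `|phi1 p|%N) *
     ('C(`|phi0 p|%N + `|phi1 p|%N, `|phi1 p|%N) * 2 ^ (N * 2 - (`|phi0 p|%N + `|phi1 p|%N)))).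
Proof.
move=> h0 h1; rewrite /scrA2.
pose Q := fun p (v : {set 'I_N * bool} * {set 'I_N * bool}) =>
   (Posz #|v.1 :\: v.2| == phi0 p) && (Posz #|v.1 :&: v.2| == phi1 p).
transitivity (#|[set x | (fun f : {ffun 'I_P -> {set 'I_N * bool} * {set 'I_N * bool}} =>
                 [forall p, Q p (f p)]) (F2 x)]|).
  apply: eq_card => -[A X]; rewrite !inE; apply: eq_forallb => p.
  by rewrite /Q Phi0E Phi1E.
rewrite (@card_bij _ _ _ _ (fun f : {ffun 'I_P -> {set 'I_N * bool} * {set 'I_N * bool}} =>
                 [forall p, Q p (f p)]) (@F2K N P) (@G2K N P)).
rewrite (card_prod_ffun Q); apply: eq_bigr => p _.
have e0 : phi0 p = Posz (`|phi0 p|%N) by rewrite gez0_abs.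
have e1 : phi1 p = Posz (`|phi1 p|%N) by rewrite gez0_abs.
have -> : (N * 2)%N = #|{: 'I_N * bool}| by rewrite card_prod card_ord card_bool.
rewrite -cnt_b2; apply: eq_card => v; rewrite !inE /Q e0 e1.
by rewrite !eqz_nat.
Qed.
End Comb.
Import Comb.
From mathcomp Require Import all_classical all_reals all_analysis.
From mathcomp Require Import ring lra.

Import Order.TTheory GRing.Theory Num.Theory.
Local Open Scope ring_scope.

Section Real.
Variable R : realType.

Lemma ln_le_sub1 (x : R) : 0 < x -> ln x <= x - 1.
Proof.
move=> x0; have := @le_ln1Dx R (x - 1); rewrite addrCA subrr addr0; apply; lra.
Qed.

Lemma lnMp (x y : R) : 0 < x -> 0 < y -> ln (x * y) = ln x + ln y.
Proof. by move=> hx hy; rewrite lnM // posrE. Qed.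

Lemma lnVp (x : R) : 0 < x -> ln x^-1 = - ln x.
Proof. by move=> hx; rewrite lnV // posrE. Qed.

Lemma lnD_le (x y : R) : 0 < x -> 0 < y -> ln x - ln y <= x / y - 1.
Proof.
move=> hx hy; rewrite -lnVp // -lnMp ?invr_gt0 //; apply: ln_le_sub1.
by rewrite divr_gt0.
Qed.

Lemma ln_mono (x y : R) : 0 < x -> x <= y -> ln x <= ln y.
Proof.
move=> hx hxy; have hy : 0 < y by apply: (lt_le_trans hx hxy).
by rewrite ler_ln // posrE.
Qed.

Lemma lnfact (n : nat) : (1 <= n)%N ->
  n%:R * ln (n%:R : R) - n%:R <= ln ((n`!)%:R : R) <=
  n%:R * ln (n%:R : R) - n%:R + ln (n%:R : R) + 1.
Proof.
elim: n => [//|n IH] _.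
case: n IH => [|n] IH.
  by rewrite /= ln1 mulr0; apply/andP; split; lra.
have /IH/andP[l u] : (1 <= n.+1)%N by [].
set x : R := n.+1%:R; set y : R := n.+2%:R.
have hx : 1 <= x by rewrite /x ler1n.
have hy : y = x + 1 by rewrite /x /y -natr1.
have fp : 0 < ((n.+1)`!)%:R :> R by rewrite ltr0n fact_gt0.
rewrite factS natrM lnMp ?ltr0n ?fact_gt0 // -/y.
have d1 : x * (ln y - ln x) <= 1.
  have h := @lnD_le y x ltac:(lra) ltac:(lra).
  have e : y / x - 1 = x^-1 by rewrite hy; field; lra.
  have xi : x * x^-1 = 1 by rewrite mulfV //; lra.
  rewrite e in h; have := ler_wpM2l (x := x) ltac:(lra) h; rewrite xi; lra.
have d2 : 1 <= y * (ln y - ln x).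
  have := @lnD_le x y ltac:(lra) ltac:(lra).
  have e : x / y - 1 = - y^-1 by rewrite hy; field; lra.
  have yi : y * y^-1 = 1 by rewrite mulfV //; lra.
  rewrite e => h; have := ler_wpM2l (x := y) ltac:(lra) h; rewrite mulrN yi mulrBr; lra.
rewrite -/x in l u.
apply/andP; split; nra.
Qed.

Lemma lnbin (m k : nat) : (0 < k)%N -> (k < m)%N ->
  m%:R * ln (m%:R : R) - k%:R * ln (k%:R : R) - (m - k)%:R * ln ((m - k)%:R : R)
    - 2 * (ln (m%:R : R) + 1) <= ln ('C(m, k)%:R : R) <=
  m%:R * ln (m%:R : R) - k%:R * ln (k%:R : R) - (m - k)%:R * ln ((m - k)%:R : R)
    + (ln (m%:R : R) + 1).
Proof.
move=> k0 km.
have e := bin_fact (ltnW km).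
have hmk : (0 < m - k)%N by rewrite subn_gt0.
have hm : (0 < m)%N by apply: leq_trans km.
have Cp : (0 < 'C(m, k))%N by rewrite bin_gt0 ltnW.
have eR : ln ((m`!)%:R : R) = ln ('C(m, k)%:R) + ln ((k`!)%:R) + ln (((m - k)`!)%:R).
  by rewrite -e !natrM !lnMp ?ltr0n ?muln_gt0 ?fact_gt0 ?Cp // addrA.
have /andP[lm um] := @lnfact m hm.
have /andP[lk uk] := @lnfact k k0.
have /andP[lmk umk] := @lnfact (m - k) hmk.
have sub : ((m - k)%:R : R) = m%:R - k%:R by rewrite natrB // ltnW.
have l1 : ln (k%:R : R) <= ln m%:R by apply: ln_mono; rewrite ?ltr0n ?ler_nat // ltnW.
have l2 : ln ((m - k)%:R : R) <= ln m%:R by apply: ln_mono; rewrite ?ltr0n ?ler_nat // leq_subr.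
have l3 : 0 <= ln (k%:R : R) by apply: ln_ge0; rewrite ler1n.
have l4 : 0 <= ln ((m - k)%:R : R) by apply: ln_ge0; rewrite ler1n.
rewrite eR in lm um.
apply/andP; split; lra.
Qed.

Definition hn (z : R) := - (z * ln z).

Lemma phiE (k m : R) : 0 < k -> 0 < m -> k * ln k = k * ln m - m * hn (k / m).
Proof.
move=> hk hm; rewrite /hn lnMp ?invr_gt0 // lnVp //.
field; lra.
Qed.

Lemma hterm_pos (z : R) : 0 < z -> hterm z = hn z / ln 2.
Proof.
move=> hz; rewrite /hterm /log2 gt_eqF // lnVp // /hn; field.
have : 0 < ln (2 : R) by apply: ln_gt0; lra.
lra.
Qed.

Lemma ln2_gt0 : 0 < ln (2 : R).
Proof. by apply: ln_gt0; lra. Qed.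

Lemma lnpow2 (m : nat) : ln ((2 ^ m)%:R : R) = m%:R * ln 2.
Proof. by rewrite natrX lnXn ?ltr0n // mulr_natl. Qed.

Lemma block1 (m k : nat) : (0 < k)%N -> (k < m)%N ->
  m%:R * ln 2 * (entropy [:: k%:R / m%:R; 1 - k%:R / m%:R] + 1) - 2 * (ln (m%:R : R) + 1)
  <= ln (('C(m, k) * 2 ^ m)%N%:R : R) <=
  m%:R * ln 2 * (entropy [:: k%:R / m%:R; 1 - k%:R / m%:R] + 1) + 2 * (ln (m%:R : R) + 1).
Proof.
move=> k0 km.
have hm : (0 < m)%N by apply: leq_trans km.
have Cp : (0 < 'C(m, k))%N by rewrite bin_gt0 ltnW.
have mR : 0 < (m%:R : R) by rewrite ltr0n.
have kR : 0 < (k%:R : R) by rewrite ltr0n.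
have sub : ((m - k)%:R : R) = m%:R - k%:R by rewrite natrB // ltnW.
have mkR : 0 < ((m - k)%:R : R) by rewrite ltr0n subn_gt0.
have e1 : 1 - k%:R / m%:R = (m - k)%:R / (m%:R : R) by rewrite sub; field; lra.
rewrite natrM lnMp ?ltr0n ?expn_gt0 // lnpow2.
have /andP[l u] := @lnbin m k k0 km.
rewrite /entropy !big_cons big_nil addr0 e1.
rewrite !hterm_pos ?divr_gt0 //.
rewrite (phiE _ _ kR mR) (phiE _ _ mkR mR) in l u.
have l2 := ln2_gt0.
have -> : m%:R * ln 2 * (hn (k%:R / m%:R) / ln 2 + hn ((m - k)%:R / m%:R) / ln 2 + 1) =
   m%:R * hn (k%:R / m%:R) + m%:R * hn ((m - k)%:R / m%:R) + m%:R * ln (2 : R).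
  by field; lra.
have sl : ((m - k)%:R : R) * ln m%:R = m%:R * ln m%:R - k%:R * ln m%:R by rewrite sub mulrBl.
have lm : 0 <= ln (m%:R : R) by apply: ln_ge0; rewrite ler1n.
apply/andP; split; lra.
Qed.

Lemma block2 (m k0 k1 : nat) : (0 < k0)%N -> (0 < k1)%N -> (k0 + k1 < m)%N ->
  m%:R * ln 2 * (entropy [:: k0%:R / m%:R; k1%:R / m%:R; 1 - k0%:R / m%:R - k1%:R / m%:R]
     + 1 - k0%:R / m%:R - k1%:R / m%:R) - 4 * (ln (m%:R : R) + 1)
  <= ln (('C(m, k0 + k1) * ('C(k0 + k1, k1) * 2 ^ (m - (k0 + k1))))%N%:R : R) <=
  m%:R * ln 2 * (entropy [:: k0%:R / m%:R; k1%:R / m%:R; 1 - k0%:R / m%:R - k1%:R / m%:R]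
     + 1 - k0%:R / m%:R - k1%:R / m%:R) + 4 * (ln (m%:R : R) + 1).
Proof.
move=> h0 h1 hs.
have s0 : (0 < k0 + k1)%N by rewrite addn_gt0 h0.
have hm : (0 < m)%N by apply: leq_trans hs.
have k1s : (k1 < k0 + k1)%N by rewrite -{1}[k1]add0n ltn_add2r.
have Cpa : (0 < 'C(m, k0 + k1))%N by rewrite bin_gt0 ltnW.
have Cpb : (0 < 'C(k0 + k1, k1))%N by rewrite bin_gt0 ltnW.
have mR : 0 < (m%:R : R) by rewrite ltr0n.
have k0R : 0 < (k0%:R : R) by rewrite ltr0n.
have k1R : 0 < (k1%:R : R) by rewrite ltr0n.
have sub : ((m - (k0 + k1))%:R : R) = m%:R - k0%:R - k1%:R by rewrite natrB ?natrD ?opprD ?addrA // ltnW.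
have mkR : 0 < ((m - (k0 + k1))%:R : R) by rewrite ltr0n subn_gt0.
have e2 : 1 - k0%:R / m%:R - k1%:R / m%:R = (m - (k0 + k1))%:R / (m%:R : R)
  by rewrite sub; field; lra.
have pa : 0 < ('C(m, k0 + k1)%:R : R) by rewrite ltr0n.
have pb : 0 < ('C(k0 + k1, k1)%:R : R) by rewrite ltr0n.
have pc : 0 < ((2 ^ (m - (k0 + k1)))%:R : R) by rewrite ltr0n expn_gt0.
rewrite !natrM (lnMp _ _ pa (mulr_gt0 pb pc)) (lnMp _ _ pb pc) lnpow2.
have /andP[la ua] := @lnbin m (k0 + k1) s0 hs.
have /andP[lb ub] := @lnbin (k0 + k1) k1 h1 k1s.
rewrite addnK in lb ub.
rewrite e2 /entropy !big_cons big_nil addr0.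
rewrite !hterm_pos ?divr_gt0 //.
rewrite (phiE _ _ mkR mR) in la ua.
rewrite (phiE _ _ k0R mR) (phiE _ _ k1R mR) in lb ub.
have l2 := ln2_gt0.
have -> : m%:R * ln 2 * (hn (k0%:R / m%:R) / ln 2 + (hn (k1%:R / m%:R) / ln 2
      + hn ((m - (k0 + k1))%:R / m%:R) / ln 2) + 1 - k0%:R / m%:R - k1%:R / m%:R) =
   m%:R * hn (k0%:R / m%:R) + m%:R * hn (k1%:R / m%:R) + m%:R * hn ((m - (k0 + k1))%:R / m%:R)
   + (m%:R - k0%:R - k1%:R) * ln (2 : R).
  by field; lra.
have sl : ((m - (k0 + k1))%:R : R) * ln m%:R = m%:R * ln m%:R - k0%:R * ln m%:R - k1%:R * ln m%:R
  by rewrite sub !mulrBl.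
have sl2 : ((m - (k0 + k1))%:R : R) * ln 2 = (m%:R - k0%:R - k1%:R) * ln 2 by rewrite sub.
have lm : 0 <= ln (m%:R : R) by apply: ln_ge0; rewrite ler1n.
have lsm : ln ((k0 + k1)%:R : R) <= ln m%:R.
  by apply: ln_mono; rewrite ?ltr0n ?ler_nat // ltnW.
have ls : 0 <= ln ((k0 + k1)%:R : R) by apply: ln_ge0; rewrite ler1n.
have kk : ((k0 + k1)%:R : R) = k0%:R + k1%:R by rewrite natrD.
have skl : ((k0 + k1)%:R : R) * ln m%:R = k0%:R * ln m%:R + k1%:R * ln m%:R by rewrite kk mulrDl.
apply/andP; split; lra.
Qed.
End Real.

Section Final.
Variable R : realType.

Lemma ln_prodn (I : finType) (F : I -> nat) : (forall i, 0 < F i)%N ->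
  ln ((\prod_i F i)%N%:R : R) = \sum_i ln ((F i)%:R : R).
Proof.
move=> hF; rewrite natr_prod.
suff [] : 0 < \prod_i ((F i)%:R : R) /\ ln (\prod_i ((F i)%:R : R)) = \sum_i ln ((F i)%:R : R) by [].
apply: (big_ind2 (fun x y => 0 < x /\ ln x = y)) => [|x1 y1 x2 y2 [p1 e1] [p2 e2]|i _].
- by rewrite ln1.
- by split; [exact: mulr_gt0 | rewrite lnMp // e1 e2].
- by rewrite ltr0n hF.
Qed.

Lemma sum_aff (I : finType) (E : I -> R) (u v : R) :
  \sum_i (u * E i + v) = u * \sum_i E i + #|I|%:R * v.
Proof. by rewrite big_split /= -mulr_sumr sumr_const mulr_natl. Qed.

Lemma int_data (z : int) (d lb : R) : 0 < lb -> 0 < d -> lb <= z%:~R / d ->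
  (0 < `|z|)%N /\ (0 <= z)%R /\ (z%:~R : R) = (`|z|%N)%:R.
Proof.
move=> hlb hd h.
have h1 : 0 < (z%:~R : R) / d by apply: lt_le_trans h.
have h2 : 0 < (z%:~R : R) by have := mulr_gt0 h1 hd; rewrite divfK // lt0r_neq0.
have z0 : (0 < z)%R by rewrite -(ltr0z R).
have ez : z = Posz `|z|%N by rewrite gez0_abs // ltW.
split; last split; first by rewrite -ltz_nat -ez.
  exact: ltW.
by rewrite {1}ez.
Qed.

Lemma ln2_half : 1 <= 2 * ln (2 : R).
Proof.
have h := @ln_le_sub1 R 2^-1 ltac:(rewrite invr_gt0; lra).
rewrite lnVp in h; last lra.
have : (2 : R)^-1 * 2 = 1 by rewrite mulVf //; lra.
lra.
Qed.

Lemma lnbnd (n : nat) : (2 <= n)%N -> ln ((n + n)%:R : R) + 1 <= 4 * ln (n%:R : R).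
Proof.
move=> hn.
have e : ((n + n)%:R : R) = 2 * n%:R by rewrite natrD; ring.
have nR : 0 < (n%:R : R) by rewrite ltr0n; apply: leq_trans hn.
rewrite e (@lnMp R 2 n%:R ltac:(lra) nR).
have : ln (2 : R) <= ln n%:R by apply: ln_mono; [lra | rewrite ler_nat].
have := ln2_half; lra.
Qed.

Lemma main_real (eta : R) (N P : nat) (a : 'I_N -> int) (phi0 phi1 : 'I_P -> int) :
  0 < eta -> (2 <= N)%N -> (2 <= P)%N ->
  (forall n : 'I_N, eta <= abar P a n <= 1 - eta) ->
  (forall p : 'I_P, eta <= fq N phi0 p /\ eta <= fq N phi1 p /\
                    fq N phi0 p + fq N phi1 p <= 1 - eta) ->
  let D : R := H1 P a - H2 N phi0 phi1 + fbar N phi0 phi1 in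
  let B : R := 8 * (log2 (N%:R) / N%:R + log2 (P%:R) / P%:R) in
  ((#|scrA1 P a| > #|scrA2 N phi0 phi1|)%N (+) (D > 0)) ->
  - B < D <= B.
Proof.
move=> e0 hN hP ha hphi D B hx.
have NR : 0 < (N%:R : R) by rewrite ltr0n; apply: leq_trans hN.
have PR : 0 < (P%:R : R) by rewrite ltr0n; apply: leq_trans hP.
have l2 := ln2_gt0 R.
have Pm : ((P + P)%:R : R) = 2 * P%:R by rewrite natrD; ring.
have Nm : ((N * 2)%:R : R) = 2 * N%:R by rewrite natrM; ring.
have adat : forall n : 'I_N, [/\ (0 < `|a n|)%N, (`|a n| < P + P)%N, (0 <= a n)%R &
    (abar P a n : R) = (`|a n|%N)%:R / (P + P)%:R].
  move=> n; have /andP[h1 h2] := ha n.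
  have [k0 [z0 zR]] := @int_data (a n) (2 * P%:R) eta e0 ltac:(lra) h1.
  have ab : (abar P a n : R) = (`|a n|%N)%:R / (P + P)%:R by rewrite /abar zR Pm.
  split => //.
  rewrite -(ltr_nat R); have : (abar P a n : R) < 1 by lra.
  by rewrite ab ltr_pdivrMr ?mul1r // Pm; lra.
have pdat : forall p : 'I_P, [/\ (0 < `|phi0 p|)%N, (0 < `|phi1 p|)%N,
    (`|phi0 p| + `|phi1 p| < N * 2)%N & (0 <= phi0 p)%R /\ (0 <= phi1 p)%R].
  move=> p; have [h0 [h1 h2]] := hphi p.
  have [k0 [z0 zR]] := @int_data (phi0 p) (2 * N%:R) eta e0 ltac:(lra) h0.
  have [k1 [z1 zR1]] := @int_data (phi1 p) (2 * N%:R) eta e0 ltac:(lra) h1.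
  split => //.
  rewrite -(ltr_nat R) natrD; have : (fq N phi0 p + fq N phi1 p : R) < 1 by lra.
  rewrite /fq zR zR1 -mulrDl ltr_pdivrMr ?mul1r ?Nm //; lra.
have fdat : forall p : 'I_P, (fq N phi0 p : R) = (`|phi0 p|%N)%:R / (N * 2)%:R /\
                      (fq N phi1 p : R) = (`|phi1 p|%N)%:R / (N * 2)%:R.
  move=> p; have [_ _ _ [z0 z1]] := pdat p.
  have ez0 : phi0 p = Posz `|phi0 p|%N by rewrite gez0_abs.
  have ez1 : phi1 p = Posz `|phi1 p|%N by rewrite gez0_abs.
  by rewrite /fq Nm {1}ez0 {1}ez1.
have A1e := @card_A1 N P a (fun n => let: And4 _ _ h _ := adat n in h).
have A2e := @card_A2 N P phi0 phi1 (fun p => let: And4 _ _ _ (conj h _) := pdat p in h)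
                    (fun p => let: And4 _ _ _ (conj _ h) := pdat p in h).
have A1p : (0 < #|scrA1 P a|)%N.
  by rewrite A1e prodn_gt0 // => n; rewrite muln_gt0 expn_gt0 bin_gt0; case: (adat n) => _ /ltnW -> _ _.
have A2p : (0 < #|scrA2 N phi0 phi1|)%N.
  rewrite A2e prodn_gt0 // => p; rewrite !muln_gt0 expn_gt0 !bin_gt0 /=.
  by case: (pdat p) => h0 h1 /ltnW -> _; rewrite leq_addl.
set L1 := ln (#|scrA1 P a|%:R : R).
set L2 := ln (#|scrA2 N phi0 phi1|%:R : R).
have hxL : (#|scrA2 N phi0 phi1| < #|scrA1 P a|)%N = (L2 < L1).
  by rewrite /L1 /L2 ltr_ln ?posrE ?ltr0n // ltr_nat.
rewrite hxL in hx.
set T := 2 * N%:R * P%:R * ln (2 : R).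
set e1 := 2 * (ln ((P + P)%:R : R) + 1).
set e2 := 4 * (ln ((N * 2)%:R : R) + 1).
set E1 := fun n => (entropy (R:=R)) [:: abar P a n; 1 - abar P a n].
have eH1 : \sum_n E1 n = N%:R * (H1 P a : R) by rewrite /H1 mulrA mulfV ?mul1r // gt_eqF.
have hb1 : forall n : 'I_N, ((P + P)%:R * ln 2) * E1 n + ((P + P)%:R * ln 2 - e1)
     <= ln (('C(P + P, `|a n|) * 2 ^ (P + P))%N%:R : R) <=
     ((P + P)%:R * ln 2) * E1 n + ((P + P)%:R * ln 2 + e1).
  move=> n; have [k0 k1 _ ab] := adat n.
  have := @block1 R (P + P) _ k0 k1; rewrite -ab /E1 -/e1 => /andP[u v].
  by apply/andP; split; lra.
clearbody E1.
have L1b : T * H1 P a + T - N%:R * e1 <= L1 <= T * H1 P a + T + N%:R * e1.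
  rewrite /L1 A1e ln_prodn; last first.
    by move=> n; rewrite muln_gt0 expn_gt0 bin_gt0; case: (adat n) => _ /ltnW -> _ _.
  apply/andP; split.
    apply: le_trans (ler_sum _ (fun n _ => proj1 (andP (hb1 n))));
    rewrite sum_aff card_ord eH1 le_eqVlt; apply/orP; left; apply/eqP; rewrite /T Pm; ring.
  apply: le_trans (ler_sum _ (fun n _ => proj2 (andP (hb1 n)))) _;
  rewrite sum_aff card_ord eH1 le_eqVlt; apply/orP; left; apply/eqP; rewrite /T Pm; ring.
set E2 := fun p => (entropy (R:=R)) [:: fq N phi0 p; fq N phi1 p; 1 - fq N phi0 p - fq N phi1 p]
                   - (fq N phi0 p + fq N phi1 p).
have eH2 : \sum_p E2 p = P%:R * (H2 N phi0 phi1 : R) - P%:R * (fbar N phi0 phi1 : R).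
  by rewrite /E2 sumrB /H2 /fbar !mulrA mulfV ?mul1r // gt_eqF.
have hb2 : forall p : 'I_P, ((N * 2)%:R * ln 2) * E2 p + ((N * 2)%:R * ln 2 - e2)
     <= ln (('C(N * 2, `|phi0 p| + `|phi1 p|) * ('C(`|phi0 p| + `|phi1 p|, `|phi1 p|)
            * 2 ^ (N * 2 - (`|phi0 p| + `|phi1 p|))))%N%:R : R) <=
     ((N * 2)%:R * ln 2) * E2 p + ((N * 2)%:R * ln 2 + e2).
  move=> p; have [k0 k1 ks _] := pdat p; have [f0 f1] := fdat p.
  have := @block2 R (N * 2) _ _ k0 k1 ks; rewrite -f0 -f1 /E2 -/e2 => /andP[u v].
  by apply/andP; split; lra.
clearbody E2.
have L2b : T * (H2 N phi0 phi1 - fbar N phi0 phi1) + T - P%:R * e2 <= L2 <=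
           T * (H2 N phi0 phi1 - fbar N phi0 phi1) + T + P%:R * e2.
  rewrite /L2 A2e ln_prodn; last first.
    move=> p; rewrite !muln_gt0 expn_gt0 !bin_gt0 /=.
    by case: (pdat p) => h0 h1 /ltnW -> _; rewrite leq_addl.
  apply/andP; split.
    apply: le_trans (ler_sum _ (fun p _ => proj1 (andP (hb2 p))));
    rewrite sum_aff card_ord eH2 le_eqVlt; apply/orP; left; apply/eqP; rewrite /T Nm; ring.
  apply: le_trans (ler_sum _ (fun p _ => proj2 (andP (hb2 p)))) _;
  rewrite sum_aff card_ord eH2 le_eqVlt; apply/orP; left; apply/eqP; rewrite /T Nm; ring.
have TB : T * B = 16 * (P%:R * ln N%:R + N%:R * ln P%:R).
  rewrite /T /B /log2; field.
  by apply/and3P; split; rewrite gt_eqF.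
have b1 : e1 <= 8 * ln (P%:R : R) by have := @lnbnd P hP; rewrite /e1; lra.
have b2 : e2 <= 16 * ln (N%:R : R).
  have := @lnbnd N hN; rewrite /e2 (_ : (N * 2)%N = (N + N)%N); last by rewrite muln2 addnn.
  lra.
have lNp : 0 <= ln (N%:R : R) by apply: ln_ge0; rewrite ler1n; apply: leq_trans hN.
have lPp : 0 <= ln (P%:R : R) by apply: ln_ge0; rewrite ler1n; apply: leq_trans hP.
have Eb : N%:R * e1 + P%:R * e2 <= T * B.
  rewrite TB.
  have := ler_wpM2l (ltW NR) b1; have := ler_wpM2l (ltW PR) b2; nra.
have T0 : 0 < T by rewrite /T !mulr_gt0.
have TD : T * D = T * H1 P a - T * (H2 N phi0 phi1 - fbar N phi0 phi1) by rewrite /D; ring.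
have he1 : 0 <= e1.
  have : 0 <= ln ((P + P)%:R : R) by apply: ln_ge0; rewrite ler1n addn_gt0; apply/orP; left; apply: leq_trans hP.
  rewrite /e1; lra.
have he2 : 0 <= e2.
  have : 0 <= ln ((N * 2)%:R : R) by apply: ln_ge0; rewrite ler1n muln_gt0 andbT; apply: leq_trans hN.
  rewrite /e2; lra.
have B0 : 0 <= T * B.
  have := mulr_ge0 (ltW NR) he1; have := mulr_ge0 (ltW PR) he2; lra.
have B0' : 0 <= B by rewrite -(pmulr_rge0 _ T0).
move: hx; case: ltP => hL /= hD.
- have : 0 < T * (D + B).
    rewrite mulrDr TD; lra.
  rewrite pmulr_rgt0 // => hDB.
  apply/andP; split; first lra.
  move/negbTE: hD; rewrite ltNge => /negbFE; lra.
- have : T * D <= T * B by rewrite TD; lra.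
  rewrite ler_pM2l // => hDB.
  by apply/andP; split; lra.
Qed.
End Final.

Theorem mainTheorem4 (R : realType) (eta : R) :
  0 < eta -> eta < 3^-1 ->
  exists c : R, 0 < c /\
  forall (N P : nat) (a : 'I_N -> int) (phi0 phi1 : 'I_P -> int),
    (2 <= N)%N -> (2 <= P)%N ->
    (forall n : 'I_N, eta <= abar P a n <= 1 - eta) ->
    (forall p : 'I_P, eta <= fq N phi0 p /\ eta <= fq N phi1 p /\
                      fq N phi0 p + fq N phi1 p <= 1 - eta) ->
    let D : R := H1 P a - H2 N phi0 phi1 + fbar N phi0 phi1 in
    let B : R := c * (log2 (N%:R) / N%:R + log2 (P%:R) / P%:R) in
    ((#|scrA1 P a| > #|scrA2 N phi0 phi1|)%N (+) (D > 0)) ->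
    - B < D <= B.
Proof.
move=> e0 _; exists 8; split; first lra.
move=> N P a phi0 phi1 hN hP ha hphi.
exact: (@main_real R eta N P a phi0 phi1 e0 hN hP ha hphi).
Qed.
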